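(* Fix a nonempty $A\subseteq S$ and $w\in A$, and let $E_0=\{\tau_{\mathcal E_N^w}=\tau_{\mathcal E_N(A)}\}$. Let $x,y\in S$ be distinct with $r(x,y)>r(y,x)>0$, and let $q_{x,y}=r(y,x)/r(x,y)$. Then, as $N\to\infty$, $$\Big|\mathbb P_{\zeta_1^{x,y}}[E_0]-\frac{q_{x,y}-q_{x,y}^N}{1-q_{x,y}^N}\mathbb P_{\xi_N^x}[E_0]-\frac{1-q_{x,y}}{1-q_{x,y}^N}\mathbb P_{\xi_N^y}[E_0]\Big|=O(d_N\log N)$$ and $$\Big|\mathbb P_{\zeta_{N-1}^{x,y}}[E_0]-\frac{q_{x,y}^{N-1}-q_{x,y}^N}{1-q_{x,y}^N}\mathbb P_{\xi_N^x}[E_0]-\frac{1-q_{x,y}^{N-1}}{1-q_{x,y}^N}\mathbb P_{\xi_N^y}[E_0]\Big|=O(d_N\log N).$$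
   Context: $S$ is finite; $r:S\times S\to[0,\infty)$, $r(x,x)=0$, are the rates of an irreducible continuous-time Markov chain on $S$. $\mathcal H_N=\{\eta\in\{0,1,2,\dots\}^S:\sum_x\eta_x=N\}$; $\sigma^{x,y}\eta$ moves one particle from $x$ to $y$ (if $\eta_x\ge1$; else $\sigma^{x,y}\eta=\eta$). With $d_N>0$, $d_N\to0$, the inclusion process is the Markov chain on $\mathcal H_N$ with generator $(\mathcal L_NF)(\eta)=\sum_{x\ne y}\eta_x(d_N+\eta_y)r(x,y)\{F(\sigma^{x,y}\eta)-F(\eta)\}$; $\mathbb P_\eta$ its law from $\eta$; $\tau_{\mathcal C}$ the hitting time of $\mathcal C\subseteq\mathcal H_N$. $\xi_N^z$: all $N$ particles at $z$; $\mathcal E_N^z=\{\xi_N^z\}$, $\mathcal E_N(A)=\bigcup_{z\in A}\mathcal E_N^z$. For $0\le i\le N$, $\zeta_i^{x,y}$ is the configuration with $N-i$ particles at $x$, $i$ at $y$, none elsewhere (so $\zeta_0^{x,y}=\xi_N^x$, $\zeta_N^{x,y}=\xi_N^y$). $O(\cdot)$ has constant independent of $N$. *)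

(* Defs.v *)
From HB Require Import structures.
From mathcomp Require Import all_boot all_order all_algebra.
From mathcomp Require Import all_classical all_reals all_analysis.
Set Implicit Arguments. Unset Strict Implicit. Unset Printing Implicit Defensive.
Import Order.TTheory GRing.Theory Num.Theory.
Import numFieldNormedType.Exports.
Local Open Scope ring_scope.

Section Inclusion.
Variables (R : realType) (S : finType).

(* Configurations eta : S -> nat (elements of H_N are those with total mass N). *)
Definition config := {ffun S -> nat}.

Definition irreducible_rates (r : S -> S -> R) : Prop :=
  forall a b : S, connect [rel u v | 0 < r u v] a b.

Definition xi (N : nat) (z : S) : config :=
  [ffun s => if s == z then N else 0%N].

Definition zeta (N i : nat) (x y : S) : config :=
  [ffun s => if s == x then (N - i)%N else if s == y then i else 0%N].

Definition sigma (a b : S) (eta : config) : config :=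
  if (0 < eta a)%N then
    [ffun s => ((eta s - (s == a)) + (s == b))%N]
  else eta.

Definition rate (dN : R) (r : S -> S -> R) (eta : config) (a b : S) : R :=
  (eta a)%:R * (dN + (eta b)%:R) * r a b.

Definition out_rate (dN : R) (r : S -> S -> R) (eta : config) : R :=
  \sum_(a : S) \sum_(b : S | b != a) rate dN r eta a b.

Definition inE_A (N : nat) (A : {set S}) (eta : config) : bool :=
  [exists z in A, eta == xi N z].

(* hitp n eta = P_eta[ the jump chain first enters E_N(A) at step n,
   and does so at xi_N^w ]. *)
Fixpoint hitp (dN : R) (r : S -> S -> R) (N : nat) (A : {set S}) (w : S)
    (n : nat) (eta : config) : R :=
  match n with
  | 0%N => if eta == xi N w then 1 else 0
  | n'.+1 =>
      if inE_A N A eta then 0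
      else \sum_(a : S) \sum_(b : S | b != a)
             (rate dN r eta a b / out_rate dN r eta) *
             hitp dN r N A w n' (sigma a b eta)
  end.

(* P_eta[E_0] = P_eta[ tau_{E_N^w} = tau_{E_N(A)} ] for the inclusion process
   with parameter d_N = dN, computed as the sum over the (a.s. finite) step at
   which E_N(A) is first hit (the event only depends on the embedded jump chain). *)
Definition probE0 (dN : R) (r : S -> S -> R) (N : nat) (A : {set S}) (w : S)
    (eta : config) : R :=
  limn (series (fun n => hitp dN r N A w n eta)).

End Inclusion.

(* Main.v *)
Require Import Defs.
From HB Require Import structures.
From mathcomp Require Import all_boot all_order all_algebra.
From mathcomp Require Import all_classical all_reals all_analysis.
From mathcomp Require Import ring lra zify.
Import Order.TTheory GRing.Theory Num.Theory.
Import numFieldNormedType.Exports.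
Local Open Scope ring_scope.

Lemma harm_le (R : realType) (n : nat) : (1 <= n)%N ->
  \sum_(1 <= i < n.+1) (i%:R : R)^-1 <= 1 + ln (n%:R : R).
Proof.
elim: n => [//|n IH] _.
case: n IH => [|n] IH.
  by rewrite big_nat1 invr1 ln1 addr0.
rewrite big_nat_recr //=.
have h := IH isT.
have key : (n.+2%:R : R)^-1 <= ln (n.+2%:R) - ln (n.+1%:R).
  have hx : -1 < - (n.+2%:R : R)^-1.
    rewrite ltrN2 invf_lt1 ?ltr1n //.
  have := le_ln1Dx hx.
  have -> : 1 - (n.+2%:R : R)^-1 = n.+1%:R / n.+2%:R.
    have e : (n.+2%:R : R) = n.+1%:R + 1 by rewrite natr1.
    have nz : (n.+1%:R + 1 : R) != 0 by rewrite natr1 pnatr_eq0.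
    by rewrite e; field.
  rewrite ln_div ?posrE ?ltr0n // => H. by rewrite -opprB lerNr.
apply: le_trans (lerD h key) _. by rewrite addrA addrAC addrK.
Qed.

Lemma gen_rec (R : realType) (n : nat) (eps lam k : nat -> R) (qq : R) :
 (1 <= n)%N -> 0 <= qq -> qq < 1 ->
 (forall i, (1 <= i)%N -> (i < n)%N -> 0 <= lam i /\ lam i <= qq) ->
 (forall i, (1 <= i)%N -> (i < n)%N -> eps i.+1 = lam i * eps i + k i) ->
 \sum_(1 <= i < n.+1) eps i = 0 ->
 `|eps 1%N| <= (\sum_(1 <= i < n) `|k i|) / (1 - qq) /\
 `|eps n| <= 2 * ((\sum_(1 <= i < n) `|k i|) / (1 - qq)).
Proof.
move=> n1 q0 q1 hlam hrec hsum.
set K : R := \sum_(1 <= i < n) `|k i|.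
pose L i := \prod_(1 <= j < i) lam j.
pose b i := eps i - L i * eps 1%N.
have L1 : L 1%N = 1 by rewrite /L big_geq.
have LS : forall i, (1 <= i)%N -> L i.+1 = L i * lam i.
  by move=> i hi; rewrite /L big_nat_recr.
have Lb : forall i, (1 <= i)%N -> (i <= n)%N -> 0 <= L i /\ L i <= 1.
  elim=> [//|i IH] _ hin.
  case: i IH hin => [|i] IH hin; first by rewrite L1; lra.
  have [h1 h2] := IH isT (ltnW hin).
  have [l1 l2] := hlam i.+1 isT hin.
  rewrite LS //; split; first exact: mulr_ge0.
  have : L i.+1 * lam i.+1 <= 1 * qq by apply: ler_pM.
  lra.
have b1 : b 1%N = 0 by rewrite /b L1 mul1r subrr.
have bS : forall i, (1 <= i)%N -> (i < n)%N -> `|b i.+1| <= qq * `|b i| + `|k i|.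
  move=> i i1 ilt.
  have -> : b i.+1 = lam i * b i + k i.
    by rewrite /b hrec // LS //; ring.
  have [l1 l2] := hlam i i1 ilt.
  apply: le_trans (ler_normD _ _) _; rewrite normrM (ger0_norm l1) lerD2r.
  by apply: ler_wpM2r.
set B : R := \sum_(1 <= i < n.+1) `|b i|.
have B0 : 0 <= B by apply: sumr_ge0.
have HB : (1 - qq) * B <= K.
  have e1 : B = \sum_(1 <= i < n) `|b i.+1|.
    by rewrite /B big_nat_recl // b1 normr0 add0r.
  have e2 : \sum_(1 <= i < n) `|b i| <= B.
    rewrite /B big_nat_recr //=; rewrite lerDl //.
  have e3 : \sum_(1 <= i < n) `|b i.+1| <= \sum_(1 <= i < n) (qq * `|b i| + `|k i|).
    apply: ler_sum_nat => i /andP[i1 ilt]; exact: bS.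
  rewrite big_split /= -mulr_sumr -/K -e1 in e3.
  have e4 : qq * \sum_(1 <= i < n) `|b i| <= qq * B by apply: ler_wpM2l.
  move: e3 e4; set s : R := \sum_(1 <= i < n) `|b i| => e3 e4.
  rewrite mulrBl mul1r; lra.
have Bk : B <= K / (1 - qq).
  by rewrite ler_pdivlMr ?subr_gt0 // mulrC.
have hE1 : `|eps 1%N| <= B.
  have sL : 1 <= \sum_(1 <= i < n.+1) L i.
    rewrite big_nat_recl // L1 lerDl big_nat; apply: sumr_ge0 => i /andP[i1 ilt].
    by have [] := Lb i.+1 isT ilt.
  have : \sum_(1 <= i < n.+1) eps i = eps 1%N * \sum_(1 <= i < n.+1) L i + \sum_(1 <= i < n.+1) b i.
    rewrite mulr_sumr -big_split /=; apply: eq_bigr => i _; rewrite /b; ring.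
  rewrite hsum => /esym /eqP; rewrite addr_eq0 => /eqP hh.
  apply: le_trans (_ : `|eps 1%N| * \sum_(1 <= i < n.+1) L i <= _).
    by rewrite ler_peMr.
  have sL0 : 0 <= \sum_(1 <= i < n.+1) L i by apply: le_trans sL.
  rewrite -(ger0_norm sL0) -normrM hh normrN; exact: ler_norm_sum.
have bn : `|b n| <= B.
  by rewrite /B big_nat_recr //= lerDr; apply: sumr_ge0.
have [Ln0 Ln1] := Lb n n1 (leqnn n).
have en : eps n = L n * eps 1%N + b n by rewrite /b; ring.
split; first exact: le_trans Bk.
rewrite en; apply: le_trans (ler_normD _ _) _.
have : `|L n * eps 1%N| <= `|eps 1%N|.
  by rewrite normrM (ger0_norm Ln0) ler_piMl.
move: Bk; set t : R := K / (1 - qq) => Bk h1.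
have : `|L n * eps 1%N| + `|b n| <= B + B by apply: lerD => //; exact: le_trans hE1.
move=> h2; apply: le_trans h2 _; lra.
Qed.

Section Prob.
Variables (R : realType) (S : finType) (r : S -> S -> R) (dN : R) (N : nat)
  (A : {set S}) (w : S).
Hypotheses (r0 : forall a b, 0 <= r a b) (d0 : 0 < dN) (wA : w \in A).

Local Notation hp n eta := (hitp dN r N A w n eta).
Local Notation p eta a b := (rate dN r eta a b / out_rate dN r eta).

Lemma rate_ge0 eta a b : 0 <= rate dN r eta a b.
Proof.
rewrite /rate; apply: mulr_ge0 => //; apply: mulr_ge0 => //.
by apply: addr_ge0 => //; exact: ltW.
Qed.

Lemma out_ge0 eta : 0 <= out_rate dN r eta.
Proof. by apply: sumr_ge0 => a _; apply: sumr_ge0 => b _; exact: rate_ge0. Qed.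

Lemma p_ge0 eta a b : 0 <= p eta a b.
Proof. by apply: divr_ge0; [exact: rate_ge0 | exact: out_ge0]. Qed.

Lemma sum_p_le1 eta : \sum_a \sum_(b | b != a) p eta a b <= 1.
Proof.

have -> : \sum_a \sum_(b | b != a) rate dN r eta a b / out_rate dN r eta =
   out_rate dN r eta / out_rate dN r eta.
  by rewrite /out_rate mulr_suml; apply: eq_bigr => a _; rewrite mulr_suml.
have [->|nz] := eqVneq (out_rate dN r eta) 0; first by rewrite mul0r.
by rewrite divff.
Qed.

Lemma xiw_in : inE_A N A (xi N w).
Proof. apply/existsP; exists w; apply/andP; split => //. Qed.

Lemma hp_ge0 n eta : 0 <= hp n eta.
Proof.
elim: n eta => [|n IH] eta /=; first by case: ifP.
case: ifP => // _; apply: sumr_ge0 => a _; apply: sumr_ge0 => b _.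
by apply: mulr_ge0; [exact: p_ge0 | exact: IH].
Qed.

Lemma series_step M eta :
  series (fun n => hp n eta) M.+1 = hp 0%N eta +
   (if inE_A N A eta then 0 else
    \sum_a \sum_(b | b != a) p eta a b * series (fun n => hp n (sigma a b eta)) M).
Proof.
rewrite /series /= big_nat_recl //=; congr (_ + _).
case: ifP => _; first by rewrite big1.
rewrite exchange_big /=; apply: eq_bigr => a _.
rewrite exchange_big /=; apply: eq_bigr => b _.
by rewrite mulr_sumr.
Qed.

Lemma hp0_notin eta : ~~ inE_A N A eta -> hp 0%N eta = 0.
Proof.
move=> h /=; case: eqP => // e; move: h; by rewrite e xiw_in.
Qed.

Lemma series_bound M eta : 0 <= series (fun n => hp n eta) M <= 1.
Proof.
elim: M eta => [|M IH] eta; first by rewrite /series /= big_geq // lexx ler01.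
rewrite series_step; case: ifPn => hin.
  rewrite addr0 /=; case: ifP => _; by rewrite ?lexx ?ler01.
rewrite hp0_notin // add0r; apply/andP; split.
  apply: sumr_ge0 => a _; apply: sumr_ge0 => b _.
  by apply: mulr_ge0; [exact: p_ge0 | case/andP: (IH (sigma a b eta))].
apply: le_trans (sum_p_le1 eta); apply: ler_sum => a _; apply: ler_sum => b _.
have [h1 h2] := andP (IH (sigma a b eta)).
by rewrite -[leRHS]mulr1; apply: ler_wpM2l => //; exact: p_ge0.
Qed.

Lemma series_cvg eta : cvgn (series (fun n => hp n eta)).
Proof.
apply: nondecreasing_is_cvgn.
  apply: nondecreasing_series => n _ _; exact: hp_ge0.
exists 1 => _ [M _ <-]; by case/andP: (series_bound M eta).
Qed.

Lemma probE0_bound eta : 0 <= probE0 dN r N A w eta <= 1.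
Proof.
rewrite /probE0; apply/andP; split.
  apply: limr_ge; first exact: series_cvg.
  by apply: nearW => M; case/andP: (series_bound M eta).
apply: limr_le; first exact: series_cvg.
by apply: nearW => M; case/andP: (series_bound M eta).
Qed.

Lemma probE0_harm eta : ~~ inE_A N A eta ->
  probE0 dN r N A w eta =
  \sum_a \sum_(b | b != a) p eta a b * probE0 dN r N A w (sigma a b eta).
Proof.
move=> hin; rewrite /probE0; apply: cvg_lim => //.
rewrite -cvg_shiftS /=.
have -> : (fun n => series (fun n0 => hp n0 eta) n.+1) =
   (fun M => \sum_a \sum_(b | b != a) p eta a b * series (fun n => hp n (sigma a b eta)) M).
  by apply: funext => M; rewrite series_step (negbTE hin) hp0_notin // add0r.
apply: cvg_big => // [|a _]; first exact: add_continuous.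
apply: cvg_big => // [|b _]; first exact: add_continuous.
apply: cvgMl_tmp; exact: series_cvg.
Qed.

End Prob.

Section Line.
Variables (R : realType) (S : finType) (r : S -> S -> R) (dN : R) (N : nat)
  (A : {set S}) (w x y : S).
Hypotheses (r0 : forall a b, 0 <= r a b) (d0 : 0 < dN) (wA : w \in A) (xy : x != y) (rxy : 0 < r x y).

Local Notation z i := (zeta N i x y).

Lemma zx i : z i x = (N - i)%N. Proof. by rewrite ffunE eqxx. Qed.
Lemma zy i : z i y = i. Proof. by rewrite ffunE eq_sym (negbTE xy) eqxx. Qed.
Lemma zo i s : s != x -> s != y -> z i s = 0%N.
Proof. by move=> /negbTE h1 /negbTE h2; rewrite ffunE h1 h2. Qed.

Lemma z_notin i : (1 <= i)%N -> (i < N)%N -> ~~ inE_A N A (z i).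
Proof.
move=> i1 iN; apply/existsP => -[u /andP[_ /eqP e]].
have ex := congr1 (fun f : config S => f x) e.
have ey := congr1 (fun f : config S => f y) e.
move: ex ey; rewrite /= zx zy !ffunE.
case: eqP => [<-|_]; first by rewrite eq_sym (negbTE xy); lia.
by lia.
Qed.

Lemma sigma_xy i : (i < N)%N -> sigma x y (z i) = z i.+1.
Proof.
move=> iN; rewrite /sigma zx subn_gt0 iN; apply/ffunP => s; rewrite !ffunE.
case: (eqVneq s x) => [->|sx]; first by rewrite ?eqxx ?(negbTE xy) /=; lia. idtac.
by case: eqP => _ /=; lia.
Qed.

Lemma sigma_yx i : (1 <= i)%N -> (i <= N)%N -> sigma y x (z i) = z i.-1.
Proof.
move=> i1 iN; rewrite /sigma zy i1; apply/ffunP => s; rewrite !ffunE.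
case: (eqVneq s x) => [->|sx]; first by rewrite (negbTE xy) /=; lia.
by case: eqP => _ /=; lia.
Qed.

Lemma rate_xy i : rate dN r (z i) x y = (N - i)%:R * (dN + i%:R) * r x y.
Proof. by rewrite /rate zx zy. Qed.
Lemma rate_yx i : rate dN r (z i) y x = i%:R * (dN + (N - i)%:R) * r y x.
Proof. by rewrite /rate zx zy. Qed.

Lemma rate_other i a b : (i <= N)%N -> b != a -> (a, b) != (x, y) -> (a, b) != (y, x) ->
  rate dN r (z i) a b <= N%:R * dN * r a b.
Proof.
move=> iN ba h1 h2.
have key : (z i a = 0)%N \/ (z i b = 0)%N.
  case: (eqVneq a x) => [ea|ax].
    right; rewrite ea in ba h1; apply: zo => //.
    by apply: contra h1 => /eqP ->.
  case: (eqVneq a y) => [ea|ay]; last by left; apply: zo.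
  right; rewrite ea in ba h2; apply: zo => //.
  by apply: contra h2 => /eqP ->.
have za : (z i a <= N)%N.
  case: (eqVneq a x) => [->|ax]; first by rewrite zx leq_subr.
  case: (eqVneq a y) => [->|ay]; first by rewrite zy.
  by rewrite zo.
rewrite /rate; case: key => [->|->].
  by rewrite mul0r mul0r; apply: mulr_ge0 => //; apply: mulr_ge0 => //; exact: ltW.
rewrite addr0 ler_wpM2r //; apply: ler_wpM2r; first exact: ltW.
by rewrite ler_nat.
Qed.

Local Notation h eta := (probE0 dN r N A w eta).

Lemma line_eq i : (1 <= i)%N -> (i < N)%N ->
  exists F : R, `|F| <= N%:R * dN * \sum_(pp : S * S) r pp.1 pp.2 /\
   (N - i)%:R * (dN + i%:R) * r x y * (h (z i.+1) - h (z i)) +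
   i%:R * (dN + (N - i)%:R) * r y x * (h (z i.-1) - h (z i)) + F = 0.
Proof.
move=> i1 iN.
set eta := z i.
have hin := z_notin i i1 iN.
have harm := @probE0_harm R S r dN N A w r0 d0 wA eta hin.
have hb := @probE0_bound R S r dN N A w r0 d0 wA.
have T0 : 0 < out_rate dN r eta.
  rewrite /out_rate pair_big_dep (bigD1 (x, y)) /=; last by rewrite eq_sym.
  apply: ltr_wpDr.
    by apply: sumr_ge0 => pp _; exact: rate_ge0.
  rewrite rate_xy; apply: mulr_gt0 => //; apply: mulr_gt0.
    by rewrite ltr0n subn_gt0.
  by apply: ltr_pwDl => //.
have e1 : \sum_a \sum_(b | b != a) rate dN r eta a b * h (sigma a b eta) =
    out_rate dN r eta * h eta.
  rewrite harm mulr_sumr; apply: eq_bigr => a _; rewrite mulr_sumr; apply: eq_bigr => b _.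
  by rewrite mulrA mulrCA divff ?gt_eqF // mulr1.
have e0 : \sum_a \sum_(b | b != a) rate dN r eta a b * (h (sigma a b eta) - h eta) = 0.
  under eq_bigr do under eq_bigr do rewrite mulrBr.
  under eq_bigr do rewrite sumrB.
  rewrite sumrB e1 /out_rate mulr_suml.
  under eq_bigr do rewrite mulr_suml.
  by rewrite subrr.
rewrite pair_big_dep in e0.
rewrite (bigD1 (x, y)) in e0; last by rewrite /= eq_sym.
rewrite (bigD1 (y, x)) in e0; last first.
  rewrite /= xy /=; apply/negP => /eqP [] /eqP; by rewrite eq_sym (negbTE xy).
rewrite /= in e0.
rewrite (sigma_xy i iN) (sigma_yx i i1 (ltnW iN)) (rate_xy i) (rate_yx i) in e0.
set F := \sum_(pp | _) _ in e0.
exists F; split; last by rewrite -e0 addrA.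
apply: le_trans (ler_norm_sum _ _ _) _.
apply: (@le_trans _ _ (\sum_(pp | (pp.2 != pp.1) && (pp != (x, y)) && (pp != (y, x)))
     N%:R * dN * r pp.1 pp.2)).
  apply: ler_sum => -[a b] /= /andP[/andP[ba h1] h2].
  rewrite normrM ger0_norm; last exact: rate_ge0.
  apply: (@le_trans _ _ (rate dN r eta a b * 1)).
    apply: ler_wpM2l; first exact: rate_ge0.
    have /andP[u1 u2] := hb (sigma a b eta); have /andP[v1 v2] := hb eta.
    rewrite ler_norml; apply/andP; split; lra.
  by rewrite mulr1; apply: rate_other => //; exact: ltnW.
rewrite mulr_sumr big_mkcond /=; apply: ler_sum => pp _.
case: ifP => _ //; apply: mulr_ge0 => //; apply: mulr_ge0 => //; exact: ltW.
Qed.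

End Line.

Lemma fixedN (R : realType) (N : nat) (h : nat -> R) (d rxy q rho : R) :
  (2 <= N)%N -> 0 < d -> 0 < rxy -> 0 < q -> q < 1 -> 0 <= rho -> q * d <= (1 - q) / 2 ->
  0 <= h 0%N <= 1 -> 0 <= h N <= 1 ->
  (forall i, (1 <= i)%N -> (i < N)%N -> exists F : R, `|F| <= N%:R * d * rho /\
     (N - i)%:R * (d + i%:R) * rxy * (h i.+1 - h i) +
     i%:R * (d + (N - i)%:R) * (q * rxy) * (h i.-1 - h i) + F = 0) ->
  let K := 8 * (rxy + rho) / ((1 - q) * rxy) in
  `| h 1%N - (q - q ^+ N) / (1 - q ^+ N) * h 0%N - (1 - q) / (1 - q ^+ N) * h N |
     <= K * (d * (1 + ln N%:R)) /\
  `| h N.-1 - (q ^+ N.-1 - q ^+ N) / (1 - q ^+ N) * h 0%N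
     - (1 - q ^+ N.-1) / (1 - q ^+ N) * h N | <= K * (d * (1 + ln N%:R)).
Proof.
move=> N2 d0 r0 q0 q1 rho0 qd /andP[h00 h01] /andP[hN0 hN1] hline K.
have qN1 : q ^+ N < 1 by rewrite exprn_ilt1 ?ltW // -lt0n; lia.
have qN0 : 0 <= q ^+ N by rewrite exprn_ge0 // ltW.
have qNnz : 1 - q ^+ N != 0 by rewrite subr_eq0 eq_sym lt_eqF.
set c := (h N - h 0%N) / (1 - q ^+ N).
pose e i := h i - (h 0%N + c * (1 - q ^+ i)).
pose eps i := e i - e i.-1.
pose U i := (N - i)%:R * (d + i%:R) * rxy.
pose D i := i%:R * (d + (N - i)%:R) * (q * rxy).
pose lam i := D i / U i.
pose k i := eps i.+1 - lam i * eps i.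
set q' := (1 + q) / 2.
have Upos : forall i, (i < N)%N -> 0 < U i.
  move=> i iN; rewrite /U; apply: mulr_gt0 => //; apply: mulr_gt0.
    by rewrite ltr0n subn_gt0.
  by apply: ltr_pwDl => //.
have hlam : forall i, (1 <= i)%N -> (i < N)%N -> 0 <= lam i /\ lam i <= q'.
  move=> i i1 iN.
  have a1 : 1 <= (N - i)%:R :> R by rewrite ler1n subn_gt0.
  have b0 : 0 <= i%:R :> R by [].
  have Dpos : 0 <= D i.
    rewrite /D; apply: mulr_ge0; last by apply: mulr_ge0; apply: ltW.
    apply: mulr_ge0 => //; apply: addr_ge0; [exact: ltW | by []].
  split; first by apply: divr_ge0 => //; exact: ltW (Upos i iN).
  rewrite /lam ler_pdivrMr ?Upos //.
  have qq : q' - q = (1 - q) / 2 by rewrite /q'; field.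
  have f0 : 0 <= (q' - q) * (N - i)%:R - q * d.
    rewrite qq; have : (1 - q) / 2 <= (1 - q) / 2 * (N - i)%:R.
      by rewrite ler_peMr // divr_ge0 // subr_ge0 ltW.
    move: qd; generalize ((1 - q) / 2) => t; lra.
  have f1 : 0 <= i%:R * ((q' - q) * (N - i)%:R - q * d) by apply: mulr_ge0.
  have f2 : 0 <= q' * (N - i)%:R * d.
    apply: mulr_ge0; last exact: ltW.
    apply: mulr_ge0 => //; rewrite /q'; apply: divr_ge0 => //; lra.
  have : q' * U i - D i = rxy * (q' * (N - i)%:R * d + i%:R * ((q' - q) * (N - i)%:R - q * d)).
    rewrite /U /D; ring.
  have : 0 <= rxy * (q' * (N - i)%:R * d + i%:R * ((q' - q) * (N - i)%:R - q * d)).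
    apply: mulr_ge0; [exact: ltW | exact: addr_ge0].
  by move=> H1 H2; rewrite -subr_ge0 H2.
have hrec : forall i, (1 <= i)%N -> (i < N)%N -> eps i.+1 = lam i * eps i + k i.
  by move=> i _ _; rewrite /k; ring.
have hsum : \sum_(1 <= i < N.+1) eps i = 0.
  rewrite big_add1 /=.
  have -> : \sum_(0 <= i < N) eps i.+1 = \sum_(0 <= i < N) (e i.+1 - e i) by [].
  rewrite telescope_sumr // /e expr0 subrr mulr0 addr0 subrr.
  by rewrite /c divfK //; ring.
have q'0 : 0 <= q' by rewrite /q'; apply: divr_ge0 => //; lra.
have q'1 : q' < 1 by rewrite /q' ltr_pdivrMr //; lra.
have [g1 g2] := gen_rec R N eps lam k q' (ltnW N2) q'0 q'1 hlam hrec hsum.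
have qNq : 1 - q <= 1 - q ^+ N.
  have [M ->] : exists M, N = M.+1 by exists N.-1; rewrite prednK // ltnW.
  have : q * q ^+ M <= q * 1 by apply: ler_wpM2l; [exact: ltW | apply: exprn_ile1; exact: ltW]. rewrite exprS; lra.
have cb : `|c * (1 - q)| <= 1.
  rewrite /c normrM (ger0_norm (_ : 0 <= 1 - q)); last by lra.
  rewrite normrM normfV (ger0_norm (_ : 0 <= 1 - q ^+ N)); last by lra.
  have t2 : `|h N - h 0%N| <= 1 by rewrite ler_norml; apply/andP; split; lra.
  have t1 : (1 - q ^+ N)^-1 * (1 - q) <= 1.
    by rewrite mulrC -/(_ / _) ler_pdivrMr ?mul1r // subr_gt0.
  rewrite -mulrA; apply: le_trans (_ : 1 * 1 <= _); last by rewrite mul1r.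
  apply: ler_pM => //; apply: mulr_ge0 => //; [rewrite invr_ge0|]; lra.
set kap := rxy + rho.
have kb : forall i, (1 <= i)%N -> (i < N)%N ->
    `|k i| <= d * kap / rxy * ((i%:R)^-1 + ((N - i)%:R)^-1).
  move=> i i1 iN.
  have [j ej] : exists j, i = j.+1 by exists i.-1; rewrite prednK.
  subst i.
  have [F [hF hl]] := hline j.+1 i1 iN.
  have hab : (N - j.+1)%:R + j.+1%:R = N%:R :> R by rewrite -natrD subnK // ltnW.
  have a1 : 1 <= (N - j.+1)%:R :> R by rewrite ler1n subn_gt0.
  have b1 : 1 <= j.+1%:R :> R by rewrite ler1n.
  set a := (N - j.+1)%:R in hab a1 hl *.
  have HZ : U j.+1 * eps j.+2 - D j.+1 * eps j.+1 =
      - F - (c * (1 - q)) * (q ^+ j * q) * (rxy * d) * (a - j.+1%:R).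
    apply/eqP; rewrite -subr_eq0 -hl; apply/eqP; rewrite /eps /e /U /D -/a.
    rewrite /= !exprS; ring.
  have Zb : `|U j.+1 * eps j.+2 - D j.+1 * eps j.+1| <= d * kap * N%:R.
    rewrite HZ; apply: le_trans (ler_normB _ _) _.
    rewrite normrN.
    have Bb : `|c * (1 - q) * (q ^+ j * q) * (rxy * d) * (a - j.+1%:R)| <= rxy * d * N%:R.
      rewrite normrM [`|_ * (rxy * d)|]normrM [`|_ * (q ^+ _ * q)|]normrM.
      apply: le_trans (_ : 1 * 1 * (rxy * d) * N%:R <= _); last by rewrite !mul1r.
      apply: ler_pM; first by rewrite !mulr_ge0.
      - by [].
      - apply: ler_pM; first by rewrite !mulr_ge0.
        + by [].
        + apply: ler_pM => //.
          rewrite ger0_norm; last by apply: mulr_ge0; [apply: exprn_ge0|]; exact: ltW.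
          have qj : q ^+ j <= 1 by exact: exprn_ile1 (ltW q0) (ltW q1).
          apply: (le_trans _ (ltW q1)); rewrite ler_piMl //; exact: ltW.
        + by rewrite ger0_norm // mulr_ge0 // ltW.
      - by rewrite ler_norml; apply/andP; split; lra.
    move: Bb; rewrite /kap.
    set u1 := `|F|; set u2 := `|_ * (a - j.+1%:R)|.
    move=> Bb; apply: le_trans (lerD hF Bb) _.
    rewrite le_eqVlt; apply/orP; left; apply/eqP; ring.
  have kk : k j.+1 = (U j.+1 * eps j.+2 - D j.+1 * eps j.+1) / U j.+1.
    rewrite /k /lam; field; exact: lt0r_neq0 (Upos j.+1 iN).
  rewrite kk normrM normfV (gtr0_norm (Upos j.+1 iN)).
  rewrite ler_pdivrMr ?Upos //.
  apply: le_trans Zb _.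
  have -> : d * kap / rxy * (j.+1%:R^-1 + a^-1) * U j.+1 = d * kap * N%:R * ((d + j.+1%:R) / j.+1%:R).
    rewrite /U -/a -hab; field.
    by apply/and3P; split; apply: lt0r_neq0; lra.
  rewrite ler_peMr; last by rewrite ler_pdivlMr ?mul1r; lra.
  by []. apply: mulr_ge0; [apply: mulr_ge0; [exact: ltW | exact: addr_ge0 (ltW r0) rho0] | exact: ler0n].
have L0 : 0 <= ln (N%:R : R) by apply: ln_ge0; rewrite ler1n; exact: ltnW.
set L := 1 + ln (N%:R : R).
have kap0 : 0 < kap by rewrite /kap; exact: ltr_pwDl.
set Ck := d * kap / rxy.
have Ck0 : 0 < Ck by rewrite /Ck; apply: divr_gt0 => //; exact: mulr_gt0.
have ksum : \sum_(1 <= i < N) `|k i| <= Ck * (2 * L).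
  apply: le_trans (_ : \sum_(1 <= i < N) Ck * ((i%:R)^-1 + ((N - i)%:R)^-1) <= _).
    by apply: ler_sum_nat => i /andP[i1 iN]; exact: kb.
  rewrite -mulr_sumr; apply: ler_wpM2l; first exact: ltW.
  rewrite big_split /=.
  have -> : \sum_(1 <= i < N) ((N - i)%:R : R)^-1 = \sum_(1 <= i < N) (i%:R : R)^-1.
    rewrite big_nat_rev !big_nat; apply: eq_bigr => i /andP[i1 iN]; by rewrite add1n subSS subKn // ltnW.
  have hs : \sum_(1 <= i < N) (i%:R : R)^-1 <= L.
    apply: le_trans (harm_le R N (ltnW N2)).
    rewrite big_nat_recr /=; last exact: ltnW.
    by rewrite lerDl invr_ge0.
  move: hs; set t : R := \sum_(1 <= i < N) (i%:R : R)^-1 => hs; lra.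
have q'e : 1 - q' = (1 - q) / 2 by rewrite /q'; field.
have KL : 2 * (Ck * (2 * L)) <= K * (d * L) * (1 - q').
  have -> : K * (d * L) * (1 - q') = 4 * Ck * L.
    rewrite q'e /K /Ck /kap; field.
    by apply/andP; split; apply: lt0r_neq0 => //; lra.
  have : 0 <= Ck * L by apply: mulr_ge0; [exact: ltW | rewrite /L; lra].
  lra.
have q'p : 0 < 1 - q' by lra.
split.
  have -> : h 1%N - (q - q ^+ N) / (1 - q ^+ N) * h 0%N - (1 - q) / (1 - q ^+ N) * h N
      = eps 1%N by rewrite /eps /e /c /= expr1 expr0; field.
  apply: le_trans g1 _; rewrite ler_pdivrMr //.
  have p : 0 <= Ck * (2 * L) by apply: mulr_ge0; [exact: ltW | rewrite /L; lra].
  apply: le_trans ksum _; apply: le_trans _ KL; lra.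
have -> : h N.-1 - (q ^+ N.-1 - q ^+ N) / (1 - q ^+ N) * h 0%N
     - (1 - q ^+ N.-1) / (1 - q ^+ N) * h N = - eps N by rewrite /eps /e /c; field.
rewrite normrN; apply: le_trans g2 _.
rewrite mulrA ler_pdivrMr //.
have : 2 * \sum_(1 <= i < N) `|k i| <= 2 * (Ck * (2 * L)) by rewrite ler_pM2l.
move=> h2; apply: le_trans h2 KL.
Qed.

Local Open Scope classical_set_scope.
Local Open Scope ring_scope.

Theorem lemma4p8 (R : realType) (S : finType) (r : S -> S -> R)
    (d : nat -> R) (A : {set S}) (w x y : S) :
  (forall a b, 0 <= r a b) -> (forall a, r a a = 0) -> irreducible_rates r ->
  (forall N, 0 < d N) -> d @ \oo --> 0 ->
  w \in A -> x != y -> 0 < r y x -> r y x < r x y ->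
  let q := r y x / r x y in
  let P := fun (N : nat) (eta : config S) => probE0 (d N) r N A w eta in
  exists C : R, exists N0 : nat, forall N : nat, (N0 <= N)%N ->
    `| P N (zeta N 1 x y) - (q - q ^+ N) / (1 - q ^+ N) * P N (xi N x)
        - (1 - q) / (1 - q ^+ N) * P N (xi N y) | <= C * (d N * ln (N%:R))
    /\
    `| P N (zeta N N.-1 x y) - (q ^+ N.-1 - q ^+ N) / (1 - q ^+ N) * P N (xi N x)
        - (1 - q ^+ N.-1) / (1 - q ^+ N) * P N (xi N y) | <= C * (d N * ln (N%:R)).
Proof.
move=> r0 _ _ d0 dcv wA xy ryx0 ryxy q P.
have rxy0 : 0 < r x y by exact: lt_trans ryxy.
have q0 : 0 < q by rewrite /q divr_gt0.
have q1 : q < 1 by rewrite /q ltr_pdivrMr // mul1r.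
have qr : q * r x y = r y x by rewrite /q divfK // lt0r_neq0.
set rho := \sum_(pp : S * S) r pp.1 pp.2.
have rho0 : 0 <= rho by apply: sumr_ge0 => pp _.
set del := (1 - q) / (2 * q).
have del0 : 0 < del by rewrite /del; apply: divr_gt0; [rewrite subr_gt0 | apply: mulr_gt0].
have [N1 _ HN1] := @cvgr_dist_lt _ _ _ _ _ d 0 dcv del del0.
set K := 8 * (r x y + rho) / ((1 - q) * r x y).
have K0 : 0 <= K.
  rewrite /K; apply: divr_ge0; first by apply: mulr_ge0 => //; apply: addr_ge0 => //; exact: ltW.
  by apply: mulr_ge0; [rewrite subr_ge0 ltW | exact: ltW].
have ln20 : 0 < ln (2 : R) by apply: ln_gt0; lra.
exists (K * ((ln (2 : R))^-1 + 1)), (maxn 2 N1) => N.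
rewrite geq_max => /andP[N2 NN1].
have dN : `|0 - d N| < del by apply: HN1.
have dd : q * d N <= (1 - q) / 2.
  rewrite sub0r normrN gtr0_norm // in dN.
  have : q * d N <= q * del by apply: ler_wpM2l; [exact: ltW | exact: ltW].
  have -> : q * del = (1 - q) / 2 by rewrite /del; field; rewrite lt0r_neq0.
  done.
pose h i := P N (zeta N i x y).
have hb := probE0_bound R S r (d N) N A w r0 (d0 N) wA.
have hl : forall i, (0 < i)%N -> (i < N)%N -> exists F : R, `|F| <= N%:R * d N * rho /\
     (N - i)%:R * (d N + i%:R) * r x y * (h i.+1 - h i) +
     i%:R * (d N + (N - i)%:R) * (q * r x y) * (h i.-1 - h i) + F = 0.
  by move=> i i1 iN; rewrite qr; exact: (line_eq R S r (d N) N A w x y r0 (d0 N) wA xy rxy0 i i1 iN).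
have [b1 b2] := fixedN R N h (d N) (r x y) q rho N2 (d0 N) rxy0 q0 q1 rho0 dd (hb _) (hb _) hl.
have ex : zeta N 0 x y = xi N x.
  apply/ffunP => s; rewrite !ffunE subn0; case: eqP => // _; by case: eqP.
have ey : zeta N N x y = xi N y.
  apply/ffunP => s; rewrite !ffunE subnn; case: eqP => [->|_].
    by rewrite (negbTE xy).
  by [].
have l2N : ln (2 : R) <= ln (N%:R : R).
  by rewrite ler_ln ?posrE ?ltr0n ?ler_nat // (leq_trans _ N2).
have keyb : d N * (1 + ln N%:R) <= ((ln (2 : R))^-1 + 1) * (d N * ln N%:R).
  have h1 : 1 <= ln (N%:R : R) / ln 2 by rewrite ler_pdivlMr // mul1r.
  have h2 : d N <= d N * (ln (N%:R : R) / ln 2) by rewrite ler_peMr // ltW.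
  have -> : ((ln (2 : R))^-1 + 1) * (d N * ln N%:R) =
     d N * (ln (N%:R : R) / ln 2) + d N * ln N%:R by ring.
  rewrite mulrDr mulr1 lerD2r; exact: h2.
have fin : K * (d N * (1 + ln N%:R)) <= K * ((ln (2 : R))^-1 + 1) * (d N * ln N%:R).
  by rewrite -mulrA; apply: ler_wpM2l.
rewrite -ex -ey; split.
  exact: le_trans b1 fin.
exact: le_trans b2 fin.
Qed.
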